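(* Let $G$ be a connected chain graph with minimum degree $\delta(G)\ge 3$. Then $px_3(G)\le 3$. Moreover, the bound is tight: let $s\ge 4$ and $t\ge 2\cdot 2^3+4=20$, and let $G$ be the bipartite graph with parts $U=\{u_1,\dots,u_s\}$, $V=\{v_1,\dots,v_t\}$ where $N(u_1)=\dots=N(u_{s-3})=\{v_1,v_2,v_3\}$ and $N(u_{s-2})=N(u_{s-1})=N(u_s)=V$; then $px_3(G)=3$.
   Context: All graphs are finite, simple and undirected; $N(v)$ is the neighborhood of $v$. A bipartite graph $G$ with parts $U,V$ is a chain graph if $U$ can be ordered $u_1,\dots,u_s$ with $N(u_1)\subseteq N(u_2)\subseteq\cdots\subseteq N(u_s)$. An edge-coloring assigns colors to edges, adjacent edges being allowed to share a color. A tree in an edge-colored graph is proper if no two adjacent edges of it receive the same color. An edge-coloring of $G$ is a $3$-proper coloring if for every $3$-element set $S\subseteq V(G)$ there is a proper tree in $G$ containing all vertices of $S$; $px_3(G)$ is the minimum number of colors in a $3$-proper coloring of $G$. *)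

(* Defs.v *)
From mathcomp Require Import all_boot.
Set Implicit Arguments. Unset Strict Implicit. Unset Printing Implicit Defensive.

Definition simple_graph (T : finType) (e : rel T) : Prop :=
  symmetric e /\ irreflexive e.

Definition nbhd (T : finType) (e : rel T) (v : T) : {set T} := [set w | e v w].

Definition connected_graph (T : finType) (e : rel T) : Prop :=
  forall x y : T, connect e x y.

Definition min_degree_ge (T : finType) (e : rel T) (d : nat) : Prop :=
  forall v : T, d <= #|nbhd e v|.

Definition is_edge (T : finType) (e : rel T) (f : {set T}) : bool :=
  [exists x, exists y, (f == [set x; y]) && e x y].

Definition chain_graph (T : finType) (e : rel T) : Prop :=
  exists (U V : {set T}),
    [/\ [disjoint U & V], U :|: V = [set: T],
        (forall x y, e x y -> (x \in U) && (y \in V) || (x \in V) && (y \in U)) &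
        exists s : seq T, [/\ uniq s, (forall x, (x \in s) = (x \in U)) &
          sorted (fun a b => nbhd e a \subset nbhd e b) s]].

Definition edge_coloring (T : finType) (k : nat) := {set T} -> 'I_k.

(* A tree in G, given by its vertex set VT and edge set F: F consists of
   edges of G with both ends in VT, (VT, F) is connected, and |F| = |VT| - 1
   (a connected graph with |V|-1 edges is a tree). *)
Definition is_tree (T : finType) (e : rel T) (VT : {set T}) (F : {set {set T}}) : Prop :=
  [/\ VT != set0,
      (forall f, f \in F -> is_edge e f && (f \subset VT)),
      (forall x y, x \in VT -> y \in VT ->
          connect (fun a b => [set a; b] \in F) x y) &
      #|F| + 1 = #|VT| ].

Definition proper_edges (T : finType) (k : nat) (c : edge_coloring T k)
  (F : {set {set T}}) : Prop :=
  forall f1 f2, f1 \in F -> f2 \in F -> f1 != f2 -> f1 :&: f2 != set0 ->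
    c f1 != c f2.

Definition three_proper (T : finType) (e : rel T) (k : nat) (c : edge_coloring T k) : Prop :=
  forall S : {set T}, #|S| = 3 ->
    exists (VT : {set T}) (F : {set {set T}}),
      [/\ is_tree e VT F, proper_edges c F & S \subset VT].

Definition px3_le (T : finType) (e : rel T) (k : nat) : Prop :=
  exists c : edge_coloring T k, three_proper e c.

Definition px3_eq (T : finType) (e : rel T) (k : nat) : Prop :=
  px3_le e k /\ forall j, j < k -> ~ px3_le e j.

(* The tightness example: U = inl 'I_s (u_1..u_s as indices 0..s-1),
   V = inr 'I_t (v_1..v_t as 0..t-1); u_i for i < s-3 adjacent to v_1,v_2,v_3,
   the last three u's adjacent to all of V. *)
Definition ex_adj (s t : nat) (x y : 'I_s + 'I_t) : bool :=
  match x, y with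
  | inl i, inr j | inr j, inl i => (s - 3 <= i) || (j < 3)
  | _, _ => false
  end.
Arguments ex_adj : clear implicits.

(* Main.v *)
Require Import Defs.
From mathcomp Require Import all_boot zify.
Set Implicit Arguments. Unset Strict Implicit. Unset Printing Implicit Defensive.
Lemma set2_eqE (T : finType) (a b x y : T) : x != y ->
  ([set a; b] == [set x; y]) = ((a, b) == (x, y)) || ((a, b) == (y, x)).
Proof.
move=> nxy; apply/idP/idP.
  move/eqP=> E.
  have ha : a \in [set x; y] by rewrite -E set21.
  have hb : b \in [set x; y] by rewrite -E set22.
  have hx : x \in [set a; b] by rewrite E set21.
  have hy : y \in [set a; b] by rewrite E set22.
  move: ha hb hx hy; rewrite !in_set2 !xpair_eqE.
  by case/orP=> /eqP ->; case/orP=> /eqP ->; rewrite ?eqxx ?orbT //=;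
   move: nxy; rewrite eq_sym; case: eqP.
by case/orP; move/eqP; case=> -> ->; rewrite // setUC.
Qed.
Section Deg.
Variable T : finType.
Definition deg (F : {set {set T}}) v := #|[set u | [set v; u] \in F]|.
Definition twoset (F : {set {set T}}) :=
  forall f, f \in F -> exists x y, x != y /\ f = [set x; y].

Lemma degsum F : twoset F -> \sum_v deg F v = 2 * #|F|.
Proof.
move=> tw.
have -> : \sum_v deg F v = \sum_v \sum_u (([set v; u] \in F) : nat).
  apply: eq_bigr => v _; rewrite /deg -sum1_card big_mkcond /=.
  by apply: eq_bigr => u _; rewrite inE; case: ([set v; u] \in F).
rewrite pair_big /=.
have -> : \sum_(p : T * T) (([set p.1; p.2] \in F) : nat) =
          \sum_(p | [set p.1; p.2] \in F) 1.
  by rewrite [RHS]big_mkcond /=; apply: eq_bigr => p _; case: ([set p.1; p.2] \in F).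
rewrite (partition_big (fun p : T * T => [set p.1; p.2]) (mem F)) //=.
rewrite mulnC -sum_nat_const; apply: eq_bigr => f fF.
have [x [y [nxy Ef]]] := tw f fF; rewrite Ef in fF *.
rewrite (eq_bigl (mem [set (x, y); (y, x)])); last first.
  move=> p; rewrite !inE -set2_eqE //.
  by case E: ([set p.1; p.2] == _); rewrite ?andbF // andbT (eqP E).
rewrite sum1_card cards2; congr _.+1.
by rewrite xpair_eqE negb_and nxy.
Qed.

Lemma twoset_neq F v u : twoset F -> [set v; u] \in F -> u != v.
Proof.
move=> tw /tw [x [y [nxy E]]]; apply/eqP=> uv; have := cards2 x y.
by rewrite -E uv setUid cards1 nxy.
Qed.

Lemma deg_col k (c : {set T} -> 'I_k) F v :
  twoset F -> proper_edges c F -> deg F v <= k.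
Proof.
move=> tw pr; rewrite /deg -(card_in_imset (f := fun u => c [set v; u])).
  by apply: (leq_trans (max_card _)); rewrite card_ord.
move=> u1 u2; rewrite !inE => h1 h2 ec; apply/eqP; apply/negPn/negP => n12.
have := pr _ _ h1 h2; rewrite ec eqxx => H; suff : false by []; apply: H.
  apply/negP=> /eqP E; have : u1 \in [set v; u2] by rewrite -E set22.
  rewrite in_set2 (negbTE n12) orbF; apply/negP; exact: twoset_neq h1.
by apply/set0Pn; exists v; rewrite !inE !eqxx.
Qed.
End Deg.

Lemma tree_twoset (T : finType) (e : rel T) VT F :
  irreflexive e -> is_tree e VT F -> twoset F.
Proof.
move=> irr [_ hF _ _] f /hF /andP [/existsP [x /existsP [y /andP [/eqP -> exy]]] _].
exists x, y; split => //; apply/negP=> /eqP xy; by rewrite xy irr in exy.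
Qed.

Lemma deg_out (T : finType) (e : rel T) VT F v :
  is_tree e VT F -> v \notin VT -> deg F v = 0.
Proof.
move=> [_ hF _ _] nv; apply/eqP; rewrite cards_eq0; apply/eqP/setP=> u.
rewrite !inE; apply/negP=> /hF /andP [_ /subsetP /(_ v)]; rewrite set21.
by move/(_ isT); apply/negP.
Qed.

Lemma sum_deg_le (T : finType) (e : rel T) VT F (d : T -> nat) :
  is_tree e VT F -> (forall v, v \in VT -> deg F v <= d v) ->
  \sum_v deg F v <= \sum_(v in VT) d v.
Proof.
move=> tr H; rewrite [X in _ <= X]big_mkcond /=; apply: leq_sum => v _.
by case: ifP => [/H //|/negbT/(deg_out tr)->].
Qed.

Lemma few_colors (T : finType) (e : rel T) VT F k (c : {set T} -> 'I_k) :
  irreflexive e -> k <= 1 -> is_tree e VT F -> proper_edges c F -> #|VT| <= 2.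
Proof.
move=> irr hk tr pr; have tw := tree_twoset irr tr.
have := sum_deg_le (d := fun _ => k) tr (fun v _ => deg_col v tw pr).
rewrite degsum // sum_nat_const; case: tr => _ _ _ <-. nia.
Qed.

Definition o0 : 'I_3 := @Ordinal 3 0 isT.
Definition o1 : 'I_3 := @Ordinal 3 1 isT.
Definition o2 : 'I_3 := @Ordinal 3 2 isT.

Lemma ord3 (i : 'I_3) : i = o0 \/ i = o1 \/ i = o2.
Proof.
case: i => [[|[|[|n]]] Hi] //; [left|right;left|right;right];
  by apply/val_inj.
Qed.

Definition third (i j : 'I_3) : 'I_3 :=
  match (6 - i - j) %% 3 with 0 => o0 | 1 => o1 | _ => o2 end.

Lemma third_neq i j : i != j -> (third i j != i) && (third i j != j).
Proof.
by case: (ord3 i) => [->|[->|->]]; case: (ord3 j) => [->|[->|->]].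
Qed.

Definition ce : seq ('I_3 * 'I_3) :=
  [:: (o0, o1); (o2, o1); (o2, o0); (o1, o0); (o1, o2)].

Lemma ce_uniq : uniq ce. Proof. by []. Qed.
Lemma ce_neq : all (fun p => p.1 != p.2) ce. Proof. by []. Qed.
Lemma ce_prop : all (fun p => all (fun q => (p == q) ||
   (third p.1 p.2 != third q.1 q.2) || ((p.1 != q.1) && (p.2 != q.2))) ce) ce.
Proof. by []. Qed.

Lemma pick_eq (I : finType) (P : pred I) i :
  (forall j, P j = (j == i)) -> [pick j | P j] = Some i.
Proof.
move=> H; case: pickP => [j|/(_ i)]; rewrite H; first by move/eqP->.
by rewrite eqxx.
Qed.

Lemma pick_none (I : finType) (P : pred I) :
  (forall j, P j = false) -> [pick j | P j] = None.
Proof. by move=> H; case: pickP => // j; rewrite H. Qed.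

Lemma cardsU_disj (T : finType) (A B : {set T}) :
  A :&: B = set0 -> #|A :|: B| = #|A| + #|B|.
Proof. by move=> H; rewrite -cardsUI H cards0 addn0. Qed.

Section Constr.
Variables (T : finType) (e : rel T) (a b : 'I_3 -> T).
Hypotheses (irr : irreflexive e) (ia : injective a) (ib : injective b)
  (adj : forall v, (forall k, e v (a k)) \/ (forall k, e v (b k))).

Lemma eba i j : e (b i) (a j).
Proof. by case: (adj (b i)) => H; [exact: H | have := H i; rewrite irr]. Qed.

Lemma nba i j : (b i == a j) = false.
Proof. by apply/negP => /eqP E; have := eba i j; rewrite E irr. Qed.

Definition col (f : {set T}) : 'I_3 :=
  match [pick i | b i \in f], [pick j | a j \in f] with
  | Some i, Some j => third i j
  | Some i, None => i
  | None, Some j => j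
  | None, None => o0
  end.

Definition corev : {set T} := [set v | [exists i, (v == a i) || (v == b i)]].

Lemma a_core i : a i \in corev.
Proof. by rewrite inE; apply/existsP; exists i; rewrite eqxx. Qed.
Lemma b_core i : b i \in corev.
Proof. by rewrite inE; apply/existsP; exists i; rewrite eqxx orbT. Qed.
Lemma ncore_a y i : y \notin corev -> (a i == y) = false.
Proof. by move=> ny; apply/negP => /eqP E; move: ny; rewrite -E a_core. Qed.
Lemma ncore_b y i : y \notin corev -> (b i == y) = false.
Proof. by move=> ny; apply/negP => /eqP E; move: ny; rewrite -E b_core. Qed.

Lemma col_core i j : col [set b i; a j] = third i j.
Proof.
rewrite /col (@pick_eq _ _ i) ?(@pick_eq _ _ j) // => k; rewrite in_set2.
  by rewrite (inj_eq ia) eq_sym nba.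
by rewrite (inj_eq ib) nba orbF.
Qed.

Lemma col_leafA y k : y \notin corev -> col [set y; a k] = k.
Proof.
move=> ny; rewrite /col pick_none ?(@pick_eq _ _ k) // => j; rewrite in_set2.
  by rewrite ncore_a // (inj_eq ia).
by rewrite ncore_b // nba.
Qed.

Lemma col_leafB y k : y \notin corev -> col [set y; b k] = k.
Proof.
move=> ny; rewrite /col (@pick_eq _ _ k) ?pick_none // => j; rewrite in_set2.
  by rewrite ncore_a // eq_sym nba.
by rewrite ncore_b // (inj_eq ib).
Qed.

Lemma corev_card : #|corev| = 6.
Proof.
have -> : corev = [set a i | i in 'I_3] :|: [set b i | i in 'I_3].
  apply/setP=> v; rewrite !inE; apply/existsP/orP.
    case=> i /orP [] /eqP ->; [left|right]; exact: imset_f.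
  by case=> /imsetP [i _ ->]; exists i; rewrite eqxx ?orbT.
rewrite cardsU_disj ?card_imset // ?card_ord //.
apply/setP=> v; rewrite !inE; apply/negP => /andP [/imsetP [i _ ->] /imsetP [j _]].
by move/eqP; rewrite eq_sym nba.
Qed.

Definition coreF : {set {set T}} := [set [set b p.1; a p.2] | p in ce].

Lemma coreF_card : #|coreF| = 5.
Proof.
rewrite card_in_imset; first by rewrite (card_uniqP ce_uniq).
move=> [i j] [i' j'] _ _ /= E.
have : b i \in [set b i'; a j'] by rewrite -E set21.
have : a j \in [set b i'; a j'] by rewrite -E set22.
rewrite !in_set2 (inj_eq ia) (inj_eq ib) nba orbF eq_sym nba /=.
by move=> /eqP -> /eqP ->.
Qed.

Lemma ce_neqP p : p \in ce -> p.1 != p.2.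
Proof. by move=> pce; have /allP := ce_neq; apply. Qed.

Lemma ce_propP p q : p \in ce -> q \in ce -> (p == q) ||
   (third p.1 p.2 != third q.1 q.2) || ((p.1 != q.1) && (p.2 != q.2)).
Proof. by move=> pc qc; have /allP /(_ p pc) /allP := ce_prop; apply. Qed.

Variable x : 'I_3 -> T.
Hypothesis ix : injective x.

Definition K : {set 'I_3} := [set k | x k \notin corev].
Definition hub k := if e (x k) (a k) then a k else b k.
Definition leafF : {set {set T}} := [set [set x k; hub k] | k in K].
Definition VT : {set T} := corev :|: [set x k | k in K].
Definition FF : {set {set T}} := coreF :|: leafF.

Lemma hub_core k : hub k \in corev.
Proof. by rewrite /hub; case: ifP => _; rewrite ?a_core ?b_core. Qed.

Lemma e_hub k : e (x k) (hub k).
Proof.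
rewrite /hub; case: ifP => // H; case: (adj (x k)) => H'; last exact: H'.
by rewrite H' in H.
Qed.

Lemma col_hub k : k \in K -> col [set x k; hub k] = k.
Proof.
rewrite inE => nk; rewrite /hub; case: ifP => _; by rewrite ?col_leafA ?col_leafB.
Qed.

Lemma K_ncore k : k \in K -> x k \notin corev.
Proof. by rewrite inE. Qed.

Lemma leafF_card : #|leafF| = #|K|.
Proof.
rewrite card_in_imset // => k m kK mK E.
have : x k \in [set x m; hub m] by rewrite -E set21.
rewrite in_set2; case/orP => [/eqP /ix //|/eqP E']; move: (hub_core m).
by rewrite -E' (negbTE (K_ncore kK)).
Qed.

Lemma coreF_sub f : f \in coreF -> f \subset corev.
Proof.
move=> /imsetP [p _ ->]; apply/subsetP => v; rewrite in_set2.
by case/orP => /eqP ->; rewrite ?a_core ?b_core.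
Qed.

Lemma FF_card : #|FF| = 5 + #|K|.
Proof.
rewrite /FF cardsU_disj ?coreF_card ?leafF_card //.
apply/setP => f; rewrite !inE; apply/negP => /andP [/coreF_sub sf /imsetP [k kK Ef]].
move/subsetP: sf => /(_ (x k)); rewrite Ef set21 => /(_ isT).
by rewrite (negbTE (K_ncore kK)).
Qed.

Lemma VT_card : #|VT| = 6 + #|K|.
Proof.
rewrite /VT cardsU_disj ?corev_card ?card_imset //.
apply/setP => v; rewrite in_setI in_set0; apply/negP => /andP [vc /imsetP [k kK Ev]].
by move: vc; rewrite Ev (negbTE (K_ncore kK)).
Qed.

Definition R (u v : T) := [set u; v] \in FF.

Lemma R_sym : symmetric R.
Proof. by move=> u v; rewrite /R setUC. Qed.

Lemma R_core p : p \in ce -> R (b p.1) (a p.2).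
Proof. by move=> pc; rewrite /R inE; apply/orP; left; apply: imset_f. Qed.

Lemma conn_core v : v \in corev -> connect R (b o0) v.
Proof.
have s1 : connect R (b o0) (a o1) by apply: connect1; apply: (@R_core (o0, o1)).
have s2 : connect R (b o0) (b o2).
  apply: connect_trans s1 (connect1 _); rewrite R_sym; exact: (@R_core (o2, o1)).
have s3 : connect R (b o0) (a o0).
  apply: connect_trans s2 (connect1 _); exact: (@R_core (o2, o0)).
have s4 : connect R (b o0) (b o1).
  apply: connect_trans s3 (connect1 _); rewrite R_sym; exact: (@R_core (o1, o0)).
have s5 : connect R (b o0) (a o2).
  apply: connect_trans s4 (connect1 _); exact: (@R_core (o1, o2)).
rewrite inE => /existsP [i /orP [] /eqP ->]; case: (ord3 i) => [->|[->|->]] //.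
Qed.

Lemma conn_VT v : v \in VT -> connect R (b o0) v.
Proof.
rewrite inE => /orP [/conn_core //|/imsetP [k kK ->]].
apply: connect_trans (conn_core (hub_core k)) (connect1 _).
by rewrite R_sym /R inE; apply/orP; right; apply: imset_f.
Qed.

Lemma tree_FF : is_tree e VT FF.
Proof.
split.
- by apply/set0Pn; exists (b o0); rewrite inE b_core.
- move=> f; rewrite inE => /orP [fc|/imsetP [k kK ->]].
    apply/andP; split; last first.
      by apply: subset_trans (coreF_sub fc) _; apply/subsetP=> v vc; rewrite inE vc.
    case/imsetP: fc => p _ ->; apply/existsP; exists (b p.1); apply/existsP.
    by exists (a p.2); rewrite eqxx eba.
  apply/andP; split.
    by apply/existsP; exists (x k); apply/existsP; exists (hub k); rewrite eqxx e_hub.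
  apply/subsetP => v; rewrite in_set2 => /orP [] /eqP ->; rewrite inE.
    by rewrite imset_f ?orbT.
  by rewrite hub_core.
- move=> u v uV vV; apply: connect_trans (conn_VT vV).
  by rewrite (sym_connect_sym R_sym); apply: conn_VT.
- by rewrite FF_card VT_card addnC.
Qed.

Lemma core_leaf_ne p m : p \in ce -> m \in K ->
  [set b p.1; a p.2] :&: [set x m; hub m] != set0 ->
  col [set b p.1; a p.2] != col [set x m; hub m].
Proof.
move=> pc mK /set0Pn [v]; rewrite col_core col_hub // in_setI !in_set2.
have hn := ce_neqP pc; have tn := third_neq hn; case/andP: tn => t1 t2.
case/andP => H1 /orP [/eqP vx|/eqP vh].
  have : v \in corev by case/orP: H1 => /eqP ->; rewrite ?a_core ?b_core.
  by rewrite vx (negbTE (K_ncore mK)).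
move: vh H1; rewrite /hub; case: ifP => _ ->; rewrite ?(inj_eq ia) ?(inj_eq ib).
  by rewrite eq_sym nba /= => /eqP ->.
by rewrite nba orbF => /eqP ->.
Qed.

Lemma proper_FF : proper_edges col FF.
Proof.
move=> f1 f2; rewrite !inE => /orP [/imsetP [p pc ->]|/imsetP [k kK ->]]
  /orP [/imsetP [q qc ->]|/imsetP [m mK ->]] ne inter.
- rewrite !col_core; case/orP: (ce_propP pc qc) => [/orP [/eqP pq|//]|/andP [d1 d2]].
    by move: ne; rewrite pq eqxx.
  move: inter; case/set0Pn => v; rewrite in_setI !in_set2.
  case/andP => /orP [] /eqP ->.
    rewrite (inj_eq ib) nba orbF => E; by rewrite E in d1.
  rewrite (inj_eq ia) eq_sym nba /= => E; by rewrite E in d2.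
- exact: core_leaf_ne.
- rewrite eq_sym; apply: core_leaf_ne => //; by rewrite setIC.
- rewrite !col_hub //; apply/negP => /eqP km; by move: ne; rewrite km eqxx.
Qed.

Lemma main_tree : exists (VT : {set T}) (F : {set {set T}}),
  [/\ is_tree e VT F, proper_edges col F & forall k, x k \in VT].
Proof.
exists VT, FF; split; [exact: tree_FF | exact: proper_FF |] => k.
rewrite inE; case: (boolP (x k \in corev)) => //= nk.
by apply: imset_f; rewrite inE.
Qed.

End Constr.

Lemma px3_of_ab (T : finType) (e : rel T) (a b : 'I_3 -> T) :
  irreflexive e -> injective a -> injective b ->
  (forall v, (forall k, e v (a k)) \/ (forall k, e v (b k))) -> px3_le e 3.
Proof.
move=> irr ia ib adj; exists (col a b) => S HS.
pose x (k : 'I_3) : T := enum_val (cast_ord (esym HS) k).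
have ix : injective x by move=> i j /enum_val_inj /cast_ord_inj.
have [VT [F [t p hx]]] := main_tree irr ia ib adj ix.
exists VT, F; split => //; apply/subsetP => s sS.
have -> : s = x (cast_ord HS (enum_rank_in sS s)).
  by rewrite /x cast_ordK enum_rankK_in.
exact: hx.
Qed.

Lemma chain_ab (T : finType) (e : rel T) (t0 : T) :
  simple_graph e -> chain_graph e -> min_degree_ge e 3 ->
  exists a b : 'I_3 -> T, [/\ injective a, injective b &
    forall v, (forall k, e v (a k)) \/ (forall k, e v (b k))].
Proof.
move=> [sym irr] [U [V [dUV cov cross [s [us ms ss]]]]] md.
have UV v : (v \in U) || (v \in V).
  by have := in_setT v; rewrite -cov inE.
have nbU v u : v \in V -> e v u -> u \in U.
  by move=> vV /cross; rewrite (disjointFl dUV vV) /= vV.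
have nbV v u : v \in U -> e v u -> u \in V.
  by move=> vU /cross; rewrite vU /= (disjointFr dUV vU) /= orbF.
have cardU : #|U| = size s by rewrite -(card_uniqP us); apply: eq_card => z; rewrite ms.
have [v0 v0V] : exists v, v \in V.
  case/orP: (UV t0) => H; last by exists t0.
  have : 0 < #|nbhd e t0| by apply: leq_trans (md t0).
  case/card_gt0P => v; rewrite inE => tv; exists v; exact: nbV tv.
set n := size s.
have nE : n = size s by [].
clearbody n.
have n3 : 3 <= n.
  rewrite nE -cardU; apply: leq_trans (md v0) _; apply: subset_leq_card.
  by apply/subsetP => u; rewrite inE; apply: nbU.
pose r := fun x y => nbhd e x \subset nbhd e y.
have rtr : transitive r by move=> y x z; apply: subset_trans.
have rrf : reflexive r by move=> x; apply: subxx.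
have hom i j : i <= j -> j < n -> r (nth t0 s i) (nth t0 s j).
  by move=> ij jn; apply: (sorted_leq_nth rtr rrf t0 ss) => //; rewrite inE -nE; lia.
have inU u : u \in U -> index u s < n /\ nth t0 s (index u s) = u.
  by rewrite -ms => us'; rewrite nE index_mem nth_index.
set u0 := nth t0 s 0.
have H3 := md u0.
pose a (k : 'I_3) : T := enum_val (widen_ord H3 k).
have ia : injective a by move=> i j /enum_val_inj [] E; apply: val_inj.
have ea k : e u0 (a k) by have := enum_valP (widen_ord H3 k); rewrite inE.
pose b (k : 'I_3) : T := nth t0 s (n - 1 - k).
have ib : injective b.
  move=> i j /eqP; rewrite /b.
  have hi : n - 1 - i < size s by rewrite -nE; lia.
  have hj : n - 1 - j < size s by rewrite -nE; lia.
  rewrite nth_uniq //.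
  by move/eqP => E; apply: ord_inj; move: (ltn_ord i) (ltn_ord j); lia.
exists a, b; split => // v; case/orP: (UV v) => vU; [left|right] => k.
  have [iu nu] := inU v vU.
  have := hom 0 (index v s) (leq0n _) iu; rewrite nu => /subsetP /(_ (a k)).
  by rewrite !inE; apply; apply: ea.
apply/negPn/negP => nvb.
have : #|nbhd e v| <= size [seq nth t0 s i | i <- iota (n - k) k].
  apply: leq_trans (card_size _); apply: subset_leq_card; apply/subsetP => u.
  rewrite inE => evu; have uU := nbU _ _ vU evu; have [iu nu] := inU u uU.
  case: (leqP (index u s) (n - 1 - k)) => hi.
    have := hom _ _ hi; rewrite nu => /(_ ltac:(lia)) /subsetP /(_ v).
    by rewrite !inE sym evu => /(_ isT); rewrite sym (negbTE nvb).
  rewrite -nu; apply/mapP; exists (index u s) => //; rewrite mem_iota; lia.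
rewrite size_map size_iota; move: (md v) (ltn_ord k); lia.
Qed.

Lemma tree_edge (T : finType) (e : rel T) VT F v u :
  symmetric e -> irreflexive e -> is_tree e VT F -> [set v; u] \in F -> e v u.
Proof.
move=> sym irr [_ hF _ _] /hF /andP [/existsP [x /existsP [y /andP [E exy]]] _].
have nxy : x != y by apply/negP => /eqP xy; rewrite xy irr in exy.
move: E; rewrite set2_eqE // => /orP [] /eqP [-> ->] //; by rewrite sym.
Qed.

Lemma sum_bool (I : finType) (A : pred I) (P : pred I) :
  \sum_(i in A) (P i : nat) = #|[set i in A | P i]|.
Proof.
rewrite -sum1_card [RHS](eq_bigl (fun i => A i && P i)); last by move=> i; rewrite inE.
rewrite big_mkcondr; apply: eq_bigr => i _; by case: (P i).
Qed.

Section Ex.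
Variables s' t' : nat.
Hypothesis ht : 17 <= t'.

Definition G := ex_adj (s' + 3) (3 + t').
Definition exa (k : 'I_3) : 'I_(s' + 3) + 'I_(3 + t') := inr (lshift t' k).
Definition exb (k : 'I_3) : 'I_(s' + 3) + 'I_(3 + t') := inl (rshift s' k).

Lemma G_irr : irreflexive G. Proof. by case. Qed.
Lemma G_sym : symmetric G. Proof. by move=> [i|j] [i'|j']. Qed.
Lemma exa_inj : injective exa.
Proof. by move=> i j [] E; apply: val_inj. Qed.
Lemma exb_inj : injective exb.
Proof. by move=> i j [] /addnI E; apply: val_inj. Qed.

Lemma G_adj v : (forall k, G v (exa k)) \/ (forall k, G v (exb k)).
Proof.
case: v => [i|j]; [left|right] => k; rewrite /G /ex_adj /=.
  by rewrite ltn_ord orbT.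
by rewrite addnK leq_addr.
Qed.

Lemma G_px3 : px3_le G 3.
Proof. exact: px3_of_ab G_irr exa_inj exb_inj G_adj. Qed.

Lemma S3_card : #|[set exb k | k in 'I_3]| = 3.
Proof. by rewrite card_imset ?card_ord //; exact: exb_inj. Qed.

Lemma G_not_le1 j : j <= 1 -> ~ px3_le G j.
Proof.
move=> hj [c tp]; have [VT [F [tr pr sub]]] := tp _ S3_card.
have := few_colors G_irr hj tr pr; have := subset_leq_card sub.
by rewrite S3_card; lia.
Qed.

Lemma deg_sum (T : finType) (F : {set {set T}}) v :
  deg F v = \sum_u (([set v; u] \in F) : nat).
Proof.
rewrite /deg -sum1_card big_mkcond /=.
by apply: eq_bigr => u _; rewrite inE; case: ([set v; u] \in F).
Qed.

Lemma G_not_2 : ~ px3_le G 2.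
Proof.
move=> [c tp].
pose D := [set (inr (rshift 3 i) : 'I_(s' + 3) + 'I_(3 + t')) | i in 'I_t'].
have cD : #|D| = t'.
  rewrite card_imset ?card_ord // => i j [] /addnI E; exact: val_inj.
pose pat v : {ffun 'I_3 -> 'I_2} := [ffun k => c [set v; exb k]].
have [p hp] : exists p, 3 <= #|[set v in D | pat v == p]|.
  case: (pickP (fun p => 3 <= #|[set v in D | pat v == p]|)) => [p hp|none].
    by exists p.
  exfalso; have : #|D| <= 16; last by lia.
  rewrite -sum1_card (partition_big pat predT) //=.
  apply: (@leq_trans (\sum_(p : {ffun 'I_3 -> 'I_2}) 2)).
    apply: leq_sum => q _.
    rewrite (eq_bigl (mem [set v in D | pat v == q])); last by move=> v; rewrite /= inE.
    by rewrite sum1_card; have := none q => /negbT; rewrite -ltnNge ltnS.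
  by rewrite sum_nat_const card_ffun !card_ord.
set X := [set v in D | pat v == p] in hp.
pose x (k : 'I_3) : 'I_(s' + 3) + 'I_(3 + t') := enum_val (widen_ord hp k).
have ix : injective x by move=> i j /enum_val_inj [] E; apply: val_inj.
have xX k : x k \in X by apply: enum_valP.
pose S := [set x k | k in 'I_3].
have cS : #|S| = 3 by rewrite card_imset ?card_ord.
have SX v : v \in S -> (v \in D) && (pat v == p).
  by case/imsetP => k _ ->; have := xX k; rewrite inE.
have [VT [F [tr pr sub]]] := tp S cS.
have tw := tree_twoset G_irr tr.
pose W := [set exb k | k in 'I_3].
have key1 u : \sum_(v in S) (([set v; u] \in F) : nat) <= (u \in W).
  rewrite sum_bool; case: (boolP (u \in W)) => uW.
    apply/card_le1_eqP => v1 v2; rewrite !inE => /andP [v1S f1] /andP [v2S f2].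
    apply/eqP; apply/negPn/negP => n12.
    case/imsetP: uW => k _ Eu.
    have /andP [d1 /eqP p1] := SX _ v1S; have /andP [d2 /eqP p2] := SX _ v2S.
    have ec : c [set v1; u] = c [set v2; u].
      by rewrite Eu; have := congr1 (fun f : {ffun 'I_3 -> 'I_2} => f k) p1;
         have := congr1 (fun f : {ffun 'I_3 -> 'I_2} => f k) p2;
         rewrite !ffunE => -> ->.
    have := pr _ _ f1 f2; rewrite ec eqxx => H; suff : false by []; apply: H.
      apply/negP => /eqP E; have : v1 \in [set v2; u] by rewrite -E set21.
      rewrite in_set2 eq_sym (negbTE n12) /= Eu; case/imsetP: d1 => i _ ->.
      by [].
    by apply/set0Pn; exists u; rewrite !inE !eqxx !orbT.
  rewrite leqn0 cards_eq0; apply/eqP/setP => v; rewrite !inE; apply/negP.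
  case/andP => vS f; have := tree_edge G_sym G_irr tr f.
  have /andP [d _] := SX _ vS; case/imsetP: d => i _ ->.
  case: u uW {f} => [i'|j'] uW //.
  rewrite /G /ex_adj /= => /orP [hi|]; last by lia.
  rewrite addnK in hi.
  move/negP: uW; apply; apply/imsetP.
  have hk : i' - s' < 3 by move: (ltn_ord i'); lia.
  exists (Ordinal hk) => //; rewrite /exb; congr inl; apply: val_inj => /=; lia.
have key2 : \sum_(v in S) deg F v <= 3.
  under eq_bigr => v _ do rewrite deg_sum.
  rewrite exchange_big /=.
  apply: (@leq_trans (\sum_u ((u \in W) : nat))); first by apply: leq_sum => u _; apply: key1.
  rewrite sum_bool (@eq_card _ _ W) ?S3_card // => u; by rewrite !inE.
have key3 : \sum_(v | v \notin S) deg F v <= \sum_(v in VT :\: S) 2.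
  rewrite [X in _ <= X]big_mkcond [X in X <= _]big_mkcond /=.
  apply: leq_sum => v _; rewrite in_setD; case: (v \in S) => //=.
  case: ifP => vVT; first exact: deg_col tw pr.
  by rewrite (deg_out tr) ?vVT.
have := degsum tw; rewrite (bigID (mem S)) /=.
have cVS : #|VT :\: S| = #|VT| - 3 by rewrite cardsD (setIidPr sub) cS.
have := subset_leq_card sub; rewrite cS.
case: tr => _ _ _ cF.
move: key3; rewrite sum_nat_const cVS.
move: key2 cF.
set A := \sum_(i in S) deg F i. set B := \sum_(i | i \notin S) deg F i.
set n := #|VT|. set m := #|F|. lia.
Qed.

End Ex.

Theorem corollary3p6 :
  (forall (T : finType) (e : rel T),
      simple_graph e -> connected_graph e -> chain_graph e ->
      min_degree_ge e 3 -> px3_le e 3) /\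
  (forall s t : nat, 4 <= s -> 2 * 2 ^ 3 + 4 <= t ->
      px3_eq (ex_adj s t) 3).
Proof.
split.
  move=> T e [sym irr] _ ch md.
  case: (pickP (fun _ : T => true)) => [t0 _|none].
    have [a [b [ia ib adj]]] := chain_ab t0 (conj sym irr) ch md.
    exact: px3_of_ab irr ia ib adj.
  exists (fun _ => o0) => S HS; exfalso.
  have T0 : #|T| = 0 by apply: eq_card0 => x; move: (none x).
  by have := max_card S; rewrite HS T0.
move=> s t hs ht.
have [s' Es] : exists s', s = s' + 3 by exists (s - 3); lia.
have [t' Et] : exists t', t = 3 + t' by exists (t - 3); lia.
subst s t.
have ht' : 17 <= t' by move: ht; rewrite (_ : 2 * 2 ^ 3 + 4 = 20) //; lia.
split; first exact: G_px3.
case=> [|[|[|j]]] // _; [exact: G_not_le1 | exact: G_not_le1 | exact: G_not_2 ht'].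
Qed.
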